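(* Let $\vec{\alpha}=\langle\alpha_s:s\in[\mathbb{N}]^{<\infty}\rangle$ be a sequence of nonstandard hypernatural numbers. The collection of $\vec{\alpha}$-Ramsey null subsets of $[\mathbb{N}]^\infty$ is a $\sigma$-ideal: it contains $\emptyset$, is closed under subsets, and is closed under countable unions.
   Context: Setting (Alpha-Theory of Benci–Di Nasso): ZFC together with a new symbol $\alpha$ satisfying: ($\alpha$1) every sequence $\varphi=\langle\varphi_i:i\in\mathbb{N}\rangle$ has a unique ideal value $\varphi[\alpha]$; ($\alpha$2) if $\varphi[\alpha]=\psi[\alpha]$ and $f\circ\varphi$, $f\circ\psi$ make sense then $(f\circ\varphi)[\alpha]=(f\circ\psi)[\alpha]$; ($\alpha$3) constant real sequences $r$ have ideal value $r$, and $\langle i\rangle$ has ideal value $\alpha\notin\mathbb{N}$; ($\alpha$4) if $\vartheta_i=\{\varphi_i,\psi_i\}$ then $\vartheta[\alpha]=\{\varphi[\alpha],\psi[\alpha]\}$; ($\alpha$5) the constant sequence $\emptyset$ has ideal value $\emptyset$, and for nonempty $\psi_i$, $\psi[\alpha]=\{\vartheta[\alpha]:\vartheta_i\in\psi_i\ \forall i\}$. ${}^*A$ is the ideal value of the constant sequence $A$; elements of ${}^*\mathbb{N}\setminus\mathbb{N}$ are nonstandard hypernatural numbers. For finite $s$, $s\sqsubseteq X$ means $s=\{j\in X:j\le i\}$ for some $i$. A tree on $\mathbb{N}$ is a nonempty $T\subseteq[\mathbb{N}]^{<\infty}$ closed under $\sqsubseteq$-initial segments; $[T]=\{X\in[\mathbb{N}]^\infty:$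 every finite $s\sqsubseteq X$ is in $T\}$; stem $st(T)$ = $\sqsubseteq$-maximal $s\in T$ comparable with all elements of $T$; $T/s=\{t\in T:s\sqsubseteq t\}$. An $\vec{\alpha}$-tree is a tree $T$ with a stem, $T/st(T)\neq\emptyset$, and $s\cup\{\alpha_s\}\in{}^*T$ for all $s\in T/st(T)$. $\mathcal{X}\subseteq[\mathbb{N}]^\infty$ is $\vec{\alpha}$-Ramsey null if for every $\vec{\alpha}$-tree $T$ there is an $\vec{\alpha}$-tree $S\subseteq T$ with $st(S)=st(T)$ and $[S]\cap\mathcal{X}=\emptyset$. *)

(* Defs.v *)
From mathcomp Require Import all_boot.
From mathcomp Require Import boolp classical_sets cardinality.
Set Implicit Arguments. Unset Strict Implicit. Unset Printing Implicit Defensive.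
Local Open Scope classical_set_scope.

(* The ideal value of a sequence is its class in the ultrapower nat^nat/U, where
   U = {A : alpha \in *A} is a nonprincipal ultrafilter on nat. *)
Definition ultrafilter_on_nat (U : set (set nat)) : Prop :=
  [/\ U setT, ~ U set0,
      (forall A B, A `<=` B -> U A -> U B),
      (forall A B, U A -> U B -> U (A `&` B)) &
      (forall A, U A \/ U (~` A))].

Definition nonprincipal (U : set (set nat)) : Prop := forall n : nat, ~ U [set n].

(* A hypernatural number is the ideal value f[alpha] of f : nat -> nat;
   it is nonstandard iff it differs from every standard n, i.e.
   {i | f i = n} \notin U for all n. *)
Definition nonstandard (U : set (set nat)) (f : nat -> nat) : Prop :=
  forall n : nat, ~ U [set i | f i = n].

Definition init_seg (s X : set nat) : Prop :=
  exists i : nat, s = [set j | X j /\ (j < i)%N].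

Definition is_tree (T : set (set nat)) : Prop :=
  [/\ T !=set0,
      (forall s, T s -> finite_set s) &
      (forall s t, T t -> init_seg s t -> T s)].

Definition body (T : set (set nat)) : set (set nat) :=
  [set X | infinite_set X /\ (forall s, finite_set s -> init_seg s X -> T s)].

Definition comparable_all (T : set (set nat)) (s : set nat) : Prop :=
  forall t, T t -> init_seg s t \/ init_seg t s.

Definition is_stem (T : set (set nat)) (s : set nat) : Prop :=
  [/\ T s, comparable_all T s &
      (forall s', T s' -> comparable_all T s' -> init_seg s s' -> s' = s)].

Definition tree_above (T : set (set nat)) (s : set nat) : set (set nat) :=
  [set t | T t /\ init_seg s t].

(* An alpha-tree with stem st, where alpha_s = (phi s)[alpha]:
   "s U {alpha_s} \in *T" is {i | T (s U {phi s i})} \in U. *)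
Definition alpha_tree_stem (U : set (set nat)) (phi : set nat -> nat -> nat)
    (T : set (set nat)) (st : set nat) : Prop :=
  [/\ is_tree T, is_stem T st, tree_above T st !=set0 &
      (forall s, tree_above T st s -> U [set i | T (s `|` [set phi s i])])].

Definition alpha_ramsey_null (U : set (set nat)) (phi : set nat -> nat -> nat)
    (X : set (set nat)) : Prop :=
  forall T st, alpha_tree_stem U phi T st ->
    exists S, [/\ alpha_tree_stem U phi S st, S `<=` T & body S `&` X = set0].

(* Main.v *)
Require Import Defs.
From mathcomp Require Import all_boot.
From mathcomp Require Import boolp classical_sets cardinality.
Set Implicit Arguments. Unset Strict Implicit. Unset Printing Implicit Defensive.
Local Open Scope classical_set_scope.

Definition pre (X : set nat) (i : nat) : set nat := [set j | X j /\ (j < i)%N].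

Lemma pre_pre X i j : pre (pre X i) j = pre X (minn i j).
Proof.
apply/seteqP; split => x /=; rewrite /pre /= leq_min.
  by move=> [[Xx xi] xj]; rewrite xi xj.
by move=> [Xx /andP[xi xj]].
Qed.

Lemma iseg_sub a b : init_seg a b -> a `<=` b.
Proof. by move=> [i ->] x []. Qed.

Lemma iseg_trans a b c : init_seg a b -> init_seg b c -> init_seg a c.
Proof.
move=> [i ->] [j ->]; exists (minn j i).
by rewrite -/(pre c j) -/(pre (pre c j) i) pre_pre.
Qed.

Lemma iseg_comp a b X : init_seg a X -> init_seg b X -> init_seg a b \/ init_seg b a.
Proof.
move=> [i ->] [j ->].
case: (leqP i j) => h.
  left; exists i; rewrite -/(pre X i) -/(pre X j) -/(pre (pre X j) i) pre_pre.
  by rewrite (minn_idPr h).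
right; exists j; rewrite -/(pre X i) -/(pre X j) -/(pre (pre X i) j) pre_pre.
by rewrite (minn_idPr (ltnW h)).
Qed.

Lemma bound_finite s : finite_set s -> exists N, forall x, s x -> (x < N)%N.
Proof.
move/finite_seqP => [l ->].
elim: l => [|a l [N HN]]; first by exists 0%N.
exists (maxn a.+1 N) => x /=; rewrite in_cons => /orP[/eqP ->|xl].
  by rewrite leq_max leqnn.
by rewrite leq_max (HN x xl) orbT.
Qed.

Lemma iseg_refl s : finite_set s -> init_seg s s.
Proof.
move=> /bound_finite [N HN]; exists N; apply/seteqP; split => x /=.
  by move=> sx; split => //; apply: HN.
by case.
Qed.

Lemma finite_pre X i : finite_set (pre X i).
Proof. apply: (sub_finite_set _ (finite_II i)) => x [] //. Qed.

Lemma infinite_big X N : infinite_set X -> exists x, X x /\ (N <= x)%N.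
Proof.
move=> hX; apply: contrapT => hn; apply: hX.
apply: (sub_finite_set _ (finite_II N)) => x Xx /=.
rewrite ltnNge; apply/negP => h; apply: hn; by exists x.
Qed.

Lemma iseg_sub_iseg a b X : init_seg a X -> init_seg b X -> a `<=` b -> init_seg a b.
Proof.
move=> ha hb ab; case: (iseg_comp ha hb) => // /iseg_sub ba.
have -> : a = b by apply/seteqP; split.
case: hb => j ->; apply: iseg_refl; exact: finite_pre.
Qed.

Section Ultra.
Variable U : set (set nat).
Hypothesis hU : ultrafilter_on_nat U.

Lemma U_mono A B : A `<=` B -> U A -> U B.
Proof. by case: hU => _ _ h _ _; apply: h. Qed.

Lemma U_nonempty A : U A -> exists x, A x.
Proof.
move=> UA; apply: contrapT => hn; case: hU => _ h0 _ _ _; apply: h0.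
have -> : (set0 : set nat) = A; last by [].
apply/seteqP; split => x //= Ax; apply: hn; by exists x.
Qed.

Lemma U_inter A B : U A -> U B -> U (A `&` B).
Proof. by case: hU => _ _ _ h _; apply: h. Qed.

Lemma U_union A B : U (A `|` B) -> ~ U A -> U B.
Proof.
move=> UAB nA; case: hU => _ _ _ _ h; case: (h A) => // UCA.
apply: (U_mono _ (U_inter UAB UCA)) => x [[]] //.
Qed.

Lemma U_big f : nonstandard U f -> forall N, U [set i | (N <= f i)%N].
Proof.
move=> hf; elim => [|N IH].
  case: hU => hT _ _ _ _; apply: (U_mono _ hT) => x _ //=.
apply: (U_union (A := [set i | f i = N])); last exact: hf.
apply: (U_mono _ IH) => x /=; rewrite leq_eqVlt => /orP[/eqP ->|h].
  by left.
by right.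
Qed.

End Ultra.

Section Alpha.
Variable U : set (set nat).
Variable phi : set nat -> nat -> nat.
Hypothesis hU : ultrafilter_on_nat U.
Hypothesis hphi : forall s : set nat, finite_set s -> nonstandard U (phi s).

Lemma succ_big s A N : finite_set s -> U A -> exists i, A i /\ (N <= phi s i)%N.
Proof.
move=> fs UA; have := U_inter hU UA (U_big hU (hphi fs) N).
by move=> /(U_nonempty hU) [i [Ai hi]]; exists i.
Qed.

Lemma two_succ T st : is_tree T -> T st -> U [set i | T (st `|` [set phi st i])] ->
  exists a b, [/\ (a < b)%N, ~ st a, ~ st b, T (st `|` [set a]) & T (st `|` [set b])].
Proof.
move=> [_ hfin _] Tst UA; have fst := hfin _ Tst.
have [N HN] := bound_finite fst.
have [i [Ai hi]] := succ_big N fst UA.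
have [j [Aj hj]] := succ_big (phi st i).+1 fst UA.
exists (phi st i), (phi st j); split => //.
- by move=> /HN; rewrite ltnNge hi.
- by move=> /HN; rewrite ltnNge (leq_trans hi (ltnW hj)).
Qed.

Lemma cmp_cases s u : init_seg s u \/ init_seg u s -> s `<=` u \/ exists i, u = pre s i.
Proof. by case=> [/iseg_sub|[i ->]]; [left|right; exists i]. Qed.

Lemma mk_alpha T st : is_tree T -> T st ->
  (forall t, T t -> init_seg st t \/ init_seg t st) ->
  (forall s, tree_above T st s -> U [set i | T (s `|` [set phi s i])]) ->
  alpha_tree_stem U phi T st.
Proof.
move=> hT Tst hcmp hal.
have fst : finite_set st by case: hT => _ h _; apply: h.
have rst : init_seg st st by apply: iseg_refl.
split => //; last by exists st.
split => // s' Ts' hc' hst.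
have [a [b [ab nsa nsb Ta Tb]]] := two_succ hT Tst (hal _ (conj Tst rst)).
apply/seteqP; split; last exact: iseg_sub.
move=> x s'x; apply: contrapT => nx.
have ua : (st `|` [set a]) a by right.
have ub : (st `|` [set b]) b by right.
case: (cmp_cases (hc' _ Ta)) => [h1|[i1 e1]]; case: (cmp_cases (hc' _ Tb)) => [h2|[i2 e2]].
- case: (h1 _ s'x) => // xa; case: (h2 _ s'x) => // xb.
  by move: ab; rewrite -xa -xb ltnn.
- have : s' b by move: ub; rewrite e2 => -[].
  move=> /h1 [//|ba]; by move: ab; rewrite ba ltnn.
- have : s' a by move: ua; rewrite e1 => -[].
  move=> /h2 [//|ba]; by move: ab; rewrite ba ltnn.
- have [s'a _] : pre s' i1 a by rewrite -e1.
  have [_ bi2] : pre s' i2 b by rewrite -e2.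
  have : pre s' i2 a by split => //; apply: ltn_trans ab bi2.
  rewrite -e2 => -[//|ba]; by move: ab; rewrite ba ltnn.
Qed.

Lemma body_mono S S' : S `<=` S' -> body S `<=` body S'.
Proof. by move=> h X [iX hX]; split => // s fs isX; apply: h; apply: hX. Qed.

Lemma null_union A B C : alpha_ramsey_null U phi A -> alpha_ramsey_null U phi B ->
  (forall X, C X -> A X \/ B X) -> alpha_ramsey_null U phi C.
Proof.
move=> nA nB hC T st hT.
have [S1 [h1 s1 b1]] := nA T st hT.
have [S2 [h2 s2 b2]] := nB S1 st h1.
exists S2; split => //; first by move=> x /s2 /s1.
apply/seteqP; split => // X [bX CX].
case: (hC X CX) => h.
- have : (body S1 `&` A) X by split => //; apply: (body_mono s2).
  by rewrite b1.
- have : (body S2 `&` B) X by split.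
  by rewrite b2.
Qed.

Lemma null_set0 : alpha_ramsey_null U phi set0.
Proof. move=> T st hT; exists T; split => //; exact: setI0. Qed.

Lemma null_sub A B : B `<=` A -> alpha_ramsey_null U phi A -> alpha_ramsey_null U phi B.
Proof.
move=> BA nA; apply: (null_union nA null_set0) => X /BA; by left.
Qed.

End Alpha.

Lemma pre_iseg X i : init_seg (pre X i) X.
Proof. by exists i. Qed.

Lemma pre_id s N : (forall x, s x -> (x < N)%N) -> pre s N = s.
Proof. move=> h; apply/seteqP; split => x; [by case | by move=> sx; split => //; apply: h]. Qed.

Lemma pre_pre_le X i j : (j <= i)%N -> pre (pre X i) j = pre X j.
Proof. by move=> ji; rewrite pre_pre (minn_idPr ji). Qed.

Lemma pre_le X i j : (i <= j)%N -> init_seg (pre X i) (pre X j).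
Proof. by move=> ij; exists i; rewrite -/(pre (pre X j) i) pre_pre (minn_idPr ij). Qed.

Lemma iseg_add s v x N : init_seg v s -> (forall y, s y -> (y < N)%N) -> (N <= x)%N ->
  init_seg v (s `|` [set x]).
Proof.
move=> [j ->] hN hx; exists (minn j N); apply/seteqP; split => y /=.
  by move=> [sy yj]; split; [left|rewrite leq_min yj hN].
rewrite leq_min => -[[sy|->] /andP[yj yN]] //.
by move: (leq_trans yN hx); rewrite ltnn.
Qed.

Lemma tree_closed T s t : is_tree T -> T t -> init_seg s t -> T s.
Proof. by case=> _ _ h; apply: h. Qed.

Section Fusion.
Variable U : set (set nat).
Variable phi : set nat -> nat -> nat.
Hypothesis hU : ultrafilter_on_nat U.
Hypothesis hphi : forall s : set nat, finite_set s -> nonstandard U (phi s).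
Variable F : nat -> set (set nat).
Hypothesis hF : forall n, alpha_ramsey_null U phi (F n).
Section Inner.
Variables (T : set (set nat)) (st : set nat).
Hypothesis hT : alpha_tree_stem U phi T st.

Definition H n := [set X | exists k, (k <= n)%N /\ F k X].

Lemma H_null n : alpha_ramsey_null U phi (H n).
Proof.
elim: n => [|n IH].
  apply: (null_sub (A := F 0)) => // X [k [k0 FX]].
  by move: k0 FX; rewrite leqn0 => /eqP ->.
apply: (null_union IH (hF n.+1)) => X [k [kn FX]].
move: kn FX; rewrite leq_eqVlt => /orP[/eqP ->|kn] FX; first by right.
by left; exists k.
Qed.

Definition good n R v S := [/\ alpha_tree_stem U phi S v, S `<=` R & body S `&` H n = set0].

Definition nul n R v : set (set nat) :=
  match pselect (exists S, good n R v S) with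
  | left h => projT1 (cid h)
  | right _ => R end.

Lemma nul_spec n R v : (exists S, good n R v S) -> good n R v (nul n R v).
Proof. rewrite /nul; case: pselect => // h _; exact: (projT2 (cid h)). Qed.

Lemma nul_sub n R v : nul n R v `<=` R.
Proof. rewrite /nul; case: pselect => [h|_]; [by case: (projT2 (cid h)) | by []]. Qed.

Lemma nul_tree n R v : is_tree R -> is_tree (nul n R v).
Proof. rewrite /nul; case: pselect => [h _|_ //]; by case: (projT2 (cid h)) => -[]. Qed.

Definition restrict R v := [set t | R t /\ (init_seg v t \/ init_seg t v)].

Lemma restrict_alpha R w v : alpha_tree_stem U phi R w -> tree_above R w v ->
  alpha_tree_stem U phi (restrict R v) v.
Proof.
move=> [hR _ _ hal] [Rv wv].
have [_ hfin hcl] := hR.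
have fv := hfin _ Rv.
apply: mk_alpha => //.
- split; first by exists v; split => //; left; apply: iseg_refl.
  + by move=> s [Rs _]; apply: hfin.
  + move=> s t [Rt ct] st'; split; first exact: hcl st'.
    case: ct => [vt|tv]; first exact: iseg_comp vt st'.
    by right; apply: iseg_trans st' tv.
- by split => //; left; apply: iseg_refl.
- by move=> t [].
- move=> s [[Rs _] vs].
  have fs := hfin _ Rs.
  have [N HN] := bound_finite fs.
  have := U_inter hU (hal s (conj Rs (iseg_trans wv vs))) (U_big hU (hphi fs) N).
  apply: U_mono => // i [Ri hi]; split => //; left.
  exact: iseg_add vs HN hi.
Qed.

Lemma ex_good n R w v : alpha_tree_stem U phi R w -> tree_above R w v ->
  exists S, good n R v S.
Proof.
move=> hR hv; have [S [h1 h2 h3]] := H_null n (restrict_alpha hR hv).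
by exists S; split => // x /h2 [].
Qed.

Definition trig u i := u i /\ st `<=` pre u i.

Fixpoint Rec (u : set nat) (i : nat) : set (set nat) :=
  match i with
  | 0 => nul 0 T st
  | i'.+1 => if `[< trig u i' >] then nul i' (Rec u i') (pre u i'.+1) else Rec u i'
  end.

Lemma hTtree : is_tree T. Proof. by case: hT. Qed.
Lemma Tst : T st. Proof. by case: hT => _ []. Qed.

Lemma Rec_tree u i : is_tree (Rec u i).
Proof.
elim: i => [|i IH] /=; first exact: nul_tree hTtree.
by case: asboolP => _ //; apply: nul_tree.
Qed.

Lemma Rec_sub u i : Rec u i.+1 `<=` Rec u i.
Proof. by rewrite /=; case: asboolP => _ //; apply: nul_sub. Qed.

Lemma Rec_mono u j i : (j <= i)%N -> Rec u i `<=` Rec u j.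
Proof.
move=> ji; elim: i ji => [|i IH]; first by rewrite leqn0 => /eqP ->.
rewrite leq_eqVlt => /orP[/eqP ->//|ji].
by move=> x /Rec_sub; apply: IH.
Qed.

Lemma Rec_T u i : Rec u i `<=` T.
Proof. move=> x /(@Rec_mono u 0 i (leq0n i)); exact: nul_sub. Qed.

Lemma Rec_pre u u' i : pre u i = pre u' i -> Rec u i = Rec u' i.
Proof.
elim: i => [//|i IH] e /=.
have e' : pre u i = pre u' i.
  by rewrite -(@pre_pre_le u i.+1 i) // -(@pre_pre_le u' i.+1 i) // e.
have ut : u i = u' i.
  have h : forall a b, pre a i.+1 = pre b i.+1 -> a i -> b i.
    by move=> a b eab ai; have : pre a i.+1 i by []; rewrite eab => -[].
  by apply: propext; split; apply: h.
have -> : trig u i = trig u' i by rewrite /trig ut e'.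
by rewrite IH // e.
Qed.

Lemma Rec_const u i : (forall x, u x -> (x < i)%N) -> forall k, (i <= k)%N -> Rec u k = Rec u i.
Proof.
move=> hu; elim => [|k IH]; first by rewrite leqn0 => /eqP ->.
rewrite leq_eqVlt => /orP[/eqP ->//|ik] /=.
rewrite asboolF ?IH // => -[/hu uk _].
by move: (leq_trans uk ik); rewrite ltnn.
Qed.

Lemma trig_facts u i w : init_seg st u -> Rec u i u -> trig u i ->
  alpha_tree_stem U phi (Rec u i) w -> (w = st \/ init_seg w (pre u i)) ->
  init_seg st (pre u i.+1) /\ exists S, good i (Rec u i) (pre u i.+1) S.
Proof.
move=> su Ru tr aw ww.
have vu : init_seg (pre u i.+1) u := pre_iseg u i.+1.
have Rv : Rec u i (pre u i.+1) := tree_closed (Rec_tree u i) Ru vu.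
have stv : init_seg st (pre u i.+1).
  apply: (iseg_sub_iseg su vu) => x /(proj2 tr) [ux xi]; split => //.
  exact: ltnW.
have wv : init_seg w (pre u i.+1).
  case: ww => [->//|wp].
  exact: iseg_trans wp (pre_le u (leqnSn i)).
split => //; exact: (ex_good i aw (conj Rv wv)).
Qed.

Lemma Rec_inv u i : init_seg st u -> (forall j, (j < i)%N -> Rec u j u) ->
  exists w, [/\ alpha_tree_stem U phi (Rec u i) w, init_seg st w &
                 (w = st \/ init_seg w (pre u i))].
Proof.
move=> su; elim: i => [|i IH] hj.
  have fst : finite_set st by case: hTtree => _ h _; apply: h; apply: Tst.
  exists st; split; [|exact: iseg_refl|by left].
  by case: (nul_spec (ex_good 0 hT (conj (Tst) (iseg_refl fst)))).
have [w [aw sw ww]] := IH (fun j ji => hj j (ltnW ji)).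
have Ru : Rec u i u := hj i (ltnSn i).
rewrite /=; case: asboolP => [tr|ntr].
  have [stv exS] := trig_facts su Ru tr aw ww.
  have [g1 _ _] := nul_spec exS.
  exists (pre u i.+1); split => //; right; apply: iseg_refl; exact: finite_pre.
exists w; split => //; case: ww => [->|wp]; first by left.
by right; exact: iseg_trans wp (pre_le u (leqnSn i)).
Qed.

Lemma Rec_trig u i : init_seg st u -> (forall j, (j <= i)%N -> Rec u j u) -> trig u i ->
  good i (Rec u i) (pre u i.+1) (Rec u i.+1).
Proof.
move=> su hj tr.
have [w [aw sw ww]] := Rec_inv su (fun j ji => hj j (ltnW ji)).
have [_ exS] := trig_facts su (hj i (leqnn i)) tr aw ww.
by rewrite /= asboolT //; apply: nul_spec.
Qed.

Definition Sf := [set u | (init_seg st u \/ init_seg u st) /\ forall i, Rec u i u].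

Lemma fst_ : finite_set st.
Proof. case: hTtree => _ h _; apply: h; apply: Tst. Qed.

Lemma stem_in S v : alpha_tree_stem U phi S v -> S v.
Proof. by case=> _ []. Qed.

Lemma Rec_st i : Rec st i = Rec st 0.
Proof.
elim: i => [//|i IH] /=; rewrite asboolF // => -[sti /(_ i sti) [_]].
by rewrite ltnn.
Qed.

Lemma Sf_st : Sf st.
Proof.
split; first by left; apply: iseg_refl; apply: fst_.
move=> i; rewrite Rec_st /=.
have [g1 _ _] := nul_spec (ex_good 0 hT (conj Tst (iseg_refl fst_))).
exact: stem_in g1.
Qed.

Lemma Sf_sub : Sf `<=` T.
Proof. by move=> u [_ /(_ 0%N) R0]; apply: (@Rec_T u 0). Qed.

Lemma Sf_tree : is_tree Sf.
Proof.
split; first by exists st; apply: Sf_st.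
  move=> s /Sf_sub Ts; by case: hTtree => _ h _; apply: h.
move=> v u [cu Ru] vu; split.
  case: cu => [su|us]; first exact: iseg_comp su vu.
  by right; apply: iseg_trans vu us.
case: (vu) => j ev; rewrite ev -/(pre u j) => i.
case: (leqP i j) => ij.
  rewrite (@Rec_pre (pre u j) u i); last by rewrite pre_pre_le.
  exact: tree_closed (Rec_tree u i) (Ru i) (pre_iseg u j).
rewrite (@Rec_const (pre u j) j) //; last exact: ltnW.
  rewrite (@Rec_pre (pre u j) u j); last by rewrite pre_pre_le.
  exact: tree_closed (Rec_tree u j) (Ru j) (pre_iseg u j).
by move=> x [].
Qed.

Lemma ext_in s N a : Sf s -> init_seg st s -> (forall x, s x -> (x < N)%N) ->
  Rec s N (s `|` [set a]) -> (N <= a)%N -> Sf (s `|` [set a]).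
Proof.
move=> [_ Rs] sts HN RsN Na.
have fs : finite_set s by case: hTtree => _ h _; apply: h; apply: Sf_sub; split => //; left.
set u := s `|` [set a].
have su : init_seg s u := iseg_add (iseg_refl fs) HN Na.
have stu := iseg_trans sts su.
have hpre : forall i, (i <= a)%N -> pre u i = pre s i.
  move=> i ia; apply/seteqP; split => x /=.
    case=> -[sx|->] xi //; by move: (leq_trans xi ia); rewrite ltnn.
  by case=> sx xi; split => //; left.
have low : forall i, (i <= a)%N -> Rec u i u.
  move=> i ia; rewrite (Rec_pre (hpre i ia)).
  case: (leqP i N) => iN; first exact: (@Rec_mono s i N iN).
  by rewrite (Rec_const HN (ltnW iN)).
have tr : trig u a.
  split; first by right.
  rewrite hpre // => x stx; rewrite /pre /=; split; first exact: iseg_sub sts _ stx.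
  exact: leq_trans (HN x (iseg_sub sts stx)) Na.
have bu : forall x, u x -> (x < a.+1)%N.
  by move=> x [/HN xN|->//]; apply: ltnW; apply: leq_trans xN Na.
have [g _ _] := Rec_trig stu low tr.
have Ra1 : Rec u a.+1 u by move: (stem_in g); rewrite pre_id.
split; first by left.
move=> i; case: (leqP i a) => ia; first exact: low.
by rewrite (Rec_const bu ia).
Qed.

Lemma Sf_alpha : alpha_tree_stem U phi Sf st.
Proof.
apply: mk_alpha => //; first exact: Sf_tree.
- exact: Sf_st.
- by move=> t [].
move=> s [[cs Rs] sts].
have fs : finite_set s by case: hTtree => _ h _; apply: h; apply: Sf_sub; split.
have [N HN] := bound_finite fs.
have [w [aw sw ww]] := @Rec_inv s N sts (fun j _ => Rs j).
have ws : init_seg w s by case: ww => [->//|]; rewrite pre_id.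
have [_ _ _ hal] := aw.
have := U_inter hU (hal s (conj (Rs N) ws)) (U_big hU (hphi fs) N).
apply: U_mono => // k [Wk Nk].
exact: ext_in (conj cs Rs) sts HN Wk Nk.
Qed.

Lemma Sf_body : body Sf `&` \bigcup_n F n = set0.
Proof.
apply/seteqP; split => // X [[iX bX] [n _ FnX]].
have [Nst HNst] := bound_finite fst_.
have hpreS : forall m, Sf (pre X m) := fun m => bX _ (finite_pre X m) (pre_iseg X m).
have stX : init_seg st X.
  have [x [Xx xN]] := infinite_big Nst iX.
  case: (proj1 (hpreS x.+1)) => [h|h]; first exact: iseg_trans h (pre_iseg X x.+1).
  have : st x by apply: (iseg_sub h); split.
  by move=> /HNst; rewrite ltnNge xN.
have [i [Xi]] := infinite_big (maxn n Nst) iX.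
rewrite geq_max => /andP[ni Ni].
have stv : init_seg st (pre X i.+1).
  apply: (iseg_sub_iseg stX (pre_iseg X i.+1)) => y sy; split; first exact: iseg_sub stX y sy.
  exact: ltnW (leq_trans (HNst y sy) Ni).
have [_ Rv] := hpreS i.+1.
have tr : trig (pre X i.+1) i.
  split; first by split.
  move=> y sy; split; last exact: leq_trans (HNst y sy) Ni.
  by split; [exact: iseg_sub stX y sy | exact: ltnW (leq_trans (HNst y sy) Ni)].
have [_ _ hb] := Rec_trig stv (fun j _ => Rv j) tr.
have : (body (Rec (pre X i.+1) i.+1) `&` H i) X.
  split; last by exists n; split.
  split => // p fp [m ->]; rewrite -/(pre X m).
  case: (leqP m i.+1) => mi.
    exact: tree_closed (Rec_tree _ i.+1) (Rv i.+1) (pre_le X mi).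
  have [_ Rp] := hpreS m.
  have := Rp i.+1; rewrite (@Rec_pre (pre X m) (pre X i.+1)) //.
  by rewrite !pre_pre_le // ltnW.
by rewrite hb.
Qed.

End Inner.

Lemma union_null : alpha_ramsey_null U phi (\bigcup_n F n).
Proof.
move=> T st hT; exists (Sf T st); split.
- exact: Sf_alpha.
- exact: Sf_sub.
- exact: Sf_body.
Qed.

End Fusion.

Theorem mainTheorem15 (U : set (set nat)) (phi : set nat -> nat -> nat) :
  ultrafilter_on_nat U -> nonprincipal U ->
  (forall s : set nat, finite_set s -> nonstandard U (phi s)) ->
  [/\ alpha_ramsey_null U phi set0,
      (forall X Y : set (set nat), X `<=` [set Z | infinite_set Z] ->
         Y `<=` X -> alpha_ramsey_null U phi X -> alpha_ramsey_null U phi Y) &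
      (forall F : nat -> set (set nat),
         (forall n, F n `<=` [set Z | infinite_set Z]) ->
         (forall n, alpha_ramsey_null U phi (F n)) ->
         alpha_ramsey_null U phi (\bigcup_n F n))].
Proof.
move=> hU _ hphi; split.
- exact: null_set0.
- by move=> X Y _ YX nX; apply: (null_sub YX nX).
- by move=> F _ hF; apply: (union_null hU hphi hF).
Qed.
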